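(* Let $n\geq 2$ and let $A$ be a commutative associative algebra over $\mathbb{C}$ equipped with $n-1$ pairwise commuting derivations $D_1,\ldots,D_{n-1}$. Define the $n$-ary bracket $$W(u_1,\ldots,u_n)=\det\begin{pmatrix} u_1 & \cdots & u_n\\ D_1u_1 & \cdots & D_1u_n\\ \vdots & & \vdots\\ D_{n-1}u_1 & \cdots & D_{n-1}u_n\end{pmatrix}$$ for $u_1,\ldots,u_n\in A$ (the determinant being computed using the commutative associative product of $A$). Then $(A,\cdot,W(\cdot,\ldots,\cdot))$ is a strong transposed Poisson $n$-Lie algebra.
   Context: An $n$-Lie algebra is a vector space $L$ with an $n$-linear skew-symmetric bracket $[\cdot,\ldots,\cdot]$ satisfying $[[x_1,\ldots,x_n],y_2,\ldots,y_n]=\sum_{i=1}^n[x_1,\ldots,x_{i-1},[x_i,y_2,\ldots,y_n],x_{i+1},\ldots,x_n]$ for all $x_i,y_j\in L$. A transposed Poisson $n$-Lie algebra is a triple $(A,\cdot,[\cdot,\ldots,\cdot])$ where $(A,\cdot)$ is a commutative associative algebra, $(A,[\cdot,\ldots,\cdot])$ is an $n$-Lie algebra, and for all $h,a_1,\ldots,a_n\in A$: $n\,h\,[a_1,\ldots,a_n]=\sum_{i=1}^n[a_1,\ldots,h a_i,\ldots,a_n]$ (with $ha_i$ in the $i$-th slot). It is called strong if moreover for all $h,y_1,y_2,x_1,\ldots,x_{n-1}\in A$: $$y_1[hy_2,x_1,\ldots,x_{n-1}]-y_2[hy_1,x_1,\ldots,x_{n-1}]+\sum_{i=1}^{n-1}(-1)^{i-1}hx_i[y_1,y_2,x_1,\ldots,\hat{x}_i,\ldots,x_{n-1}]=0,$$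 where $\hat{x}_i$ means $x_i$ is omitted. *)

(* Defs.v *)
From HB Require Import structures.
From mathcomp Require Import all_boot all_order all_fingroup all_algebra.
From mathcomp Require Import complex.
From mathcomp Require Import Rstruct.
Set Implicit Arguments. Unset Strict Implicit. Unset Printing Implicit Defensive.
Import Order.TTheory GRing.Theory Num.Theory.
Local Open Scope ring_scope.

Notation Cplx := (complex Rdefinitions.R).

Section NLie.
Variables (F : comNzRingType) (A : comAlgType F) (n : nat).

Definition upd (u : 'I_n -> A) (i : 'I_n) (a : A) : 'I_n -> A :=
  fun k => if k == i then a else u k.

(* value of a family at a natural index (0 outside the range) *)
Definition natat (x : 'I_n -> A) (j : nat) : A :=
  if (insub j : option 'I_n) is Some k then x k else 0.

(* (a, y_1, ..., y_{n-1}) : slot 0 is a, slots 1..n-1 are taken from y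
   (slot 0 of y is ignored) *)
Definition cons0 (a : A) (y : 'I_n -> A) : 'I_n -> A :=
  fun k => if val k == 0%N then a else y k.

(* (y1, y2, x_1, ..., ^x_i, ..., x_{n-1}) with x_j stored at slot j of x *)
Definition omitarg (x : 'I_n -> A) (i : nat) (y1 y2 : A) : 'I_n -> A :=
  fun k => if val k == 0%N then y1 else if val k == 1%N then y2
           else if (val k <= i)%N then natat x (val k).-1 else natat x (val k).

Definition nlinear (br : ('I_n -> A) -> A) : Prop :=
  forall (u : 'I_n -> A) (i : 'I_n) (c : F) (a b : A),
    br (upd u i (c *: a + b)) = c *: br (upd u i a) + br (upd u i b).

Definition skew_symmetric (br : ('I_n -> A) -> A) : Prop :=
  forall (s : 'S_n) (u : 'I_n -> A),
    br (fun k => u (s k)) = (-1) ^+ (odd_perm s) * br u.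

Definition filippov (br : ('I_n -> A) -> A) : Prop :=
  forall x y : 'I_n -> A,
    br (cons0 (br x) y) = \sum_(i < n) br (upd x i (br (cons0 (x i) y))).

Definition is_nLie (br : ('I_n -> A) -> A) : Prop :=
  [/\ nlinear br, skew_symmetric br & filippov br].

(* (A, mul, br) is a transposed Poisson n-Lie algebra; (A, mul) is commutative
   associative by the structure of A. *)
Definition transposed_Poisson_nLie (br : ('I_n -> A) -> A) : Prop :=
  is_nLie br /\
  forall (h : A) (a : 'I_n -> A),
    n%:R * h * br a = \sum_(i < n) br (upd a i (h * a i)).

Definition strong_condition (br : ('I_n -> A) -> A) : Prop :=
  forall (h y1 y2 : A) (x : 'I_n -> A),
    y1 * br (cons0 (h * y2) x) - y2 * br (cons0 (h * y1) x)
    + \sum_(i < n | (1 <= val i)%N)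
        (-1) ^+ (val i).-1 * h * x i * br (omitarg x (val i) y1 y2) = 0.

Definition strong_transposed_Poisson_nLie (br : ('I_n -> A) -> A) : Prop :=
  transposed_Poisson_nLie br /\ strong_condition br.

Definition derivation (d : A -> A) : Prop :=
  (forall (c : F) (a b : A), d (c *: a + b) = c *: d a + d b) /\
  (forall a b : A, d (a * b) = d a * b + a * d b).

(* row i (i >= 1) of the Wronskian matrix uses D_i, stored as D (i-1) *)
Definition Drow (D : 'I_n.-1 -> A -> A) (i : nat) (a : A) : A :=
  if (insub i.-1 : option 'I_n.-1) is Some k then D k a else 0.

Definition wronskian_bracket (D : 'I_n.-1 -> A -> A) (u : 'I_n -> A) : A :=
  \det (\matrix_(i < n, j < n) (if val i == 0%N then u j else Drow D (val i) (u j))).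

End NLie.

(* Main.v *)
Require Import Defs.
From HB Require Import structures.
From mathcomp Require Import all_boot all_order all_fingroup all_algebra.
From mathcomp Require Import complex Rstruct.
From mathcomp Require Import ring.
Import GRing.Theory Num.Theory.
Local Open Scope ring_scope.
Set Implicit Arguments. Unset Strict Implicit. Unset Printing Implicit Defensive.

Section Mx.
Variables (R : comPzRingType) (n : nat).
Implicit Types (M : 'M[R]_n).

Definition colset M (i : 'I_n) (v : 'I_n -> R) : 'M[R]_n :=
  \matrix_(r, c) if c == i then v r else M r c.
Definition rowset M (j : 'I_n) (w : 'I_n -> R) : 'M[R]_n :=
  \matrix_(r, c) if r == j then w c else M r c.
Definition delta (j : 'I_n) : 'I_n -> R := fun t => (t == j)%:R.

Lemma det_colset M i v : \det (colset M i v) = \sum_r v r * cofactor M r i.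
Proof.
rewrite (expand_det_col _ i); apply: eq_bigr => r _; rewrite mxE eqxx.
congr (_ * _); rewrite /cofactor; congr (_ * \det _).
apply/matrixP => k l; rewrite !mxE.
by have /negbTE -> : lift i l != i by rewrite eq_sym neq_lift.
Qed.

Lemma det_rowset M j w : \det (rowset M j w) = \sum_c w c * cofactor M j c.
Proof.
rewrite (expand_det_row _ j); apply: eq_bigr => c _; rewrite mxE eqxx.
congr (_ * _); rewrite /cofactor; congr (_ * \det _).
apply/matrixP => k l; rewrite !mxE.
by have /negbTE -> : lift j k != j by rewrite eq_sym neq_lift.
Qed.

Lemma sum_delta (j : 'I_n) (f : 'I_n -> R) : \sum_t delta j t * f t = f j.
Proof.
rewrite (bigD1 j) //= big1 ?addr0 /delta ?eqxx ?mul1r // => t /negbTE ->.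
by rewrite mul0r.
Qed.

Lemma cofactor_delta M j c : cofactor M j c = \det (colset M c (delta j)).
Proof. by rewrite det_colset sum_delta. Qed.

Lemma colset_id M i : colset M i (fun r => M r i) = M.
Proof. by apply/matrixP => r c; rewrite mxE; case: eqP => // ->. Qed.

Lemma colsetC M i j u v : i != j ->
  colset (colset M j u) i v = colset (colset M i v) j u.
Proof.
move=> ij; apply/matrixP => r c; rewrite !mxE.
case: (eqVneq c i) => [->|]; first by rewrite (negbTE ij).
by [].
Qed.

Lemma det_xcol M i j : i != j -> \det (xcol i j M) = - \det M.
Proof.
move=> ij; rewrite xcolE det_mulmx /tperm_mx det_perm odd_tperm ij.
by rewrite expr1 mulrN1.
Qed.

Lemma det_swap M i j u v : i != j ->
  \det (colset (colset M j u) i v) = - \det (colset (colset M j v) i u).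
Proof.
move=> ij; rewrite -(det_xcol _ ij); congr (\det _).
apply/matrixP => r c; rewrite !mxE.
case: tpermP => [->|->|/eqP ci /eqP cj]; rewrite ?eqxx.
- by rewrite eq_sym (negbTE ij).
- by rewrite eq_sym (negbTE ij).
- by rewrite (negbTE ci) (negbTE cj).
Qed.

Lemma sum_colset M (N : 'M[R]_n) :
  \sum_i \det (colset M i (fun r => N r i)) = \sum_i \sum_r N r i * cofactor M r i.
Proof. by apply: eq_bigr => i _; rewrite det_colset. Qed.

Lemma sum_row_cof M (k r : 'I_n) :
  \sum_i M k i * cofactor M r i = \det M *+ (k == r).
Proof.
have := congr1 (fun X : 'M[R]_n => X k r) (mul_mx_adj M).
rewrite !mxE => <-; apply: eq_bigr => i _; by rewrite mxE.
Qed.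

Lemma sum_diag_cof M : \sum_i \sum_r M r i * cofactor M r i = \det M *+ n.
Proof.
transitivity (\sum_(i < n) \det M); first by apply: eq_bigr => i _; rewrite -expand_det_col.
by rewrite sumr_const card_ord.
Qed.

Variable d : R -> R.
Hypothesis dadd : forall a b, d (a + b) = d a + d b.
Hypothesis dmul : forall a b, d (a * b) = d a * b + a * d b.

Lemma d0 : d 0 = 0.
Proof. by have := dadd 0 0; rewrite addr0 => /eqP; rewrite -subr_eq subrr eq_sym => /eqP. Qed.

Lemma dN a : d (- a) = - d a.
Proof. by apply/eqP; rewrite -addr_eq0 -dadd addNr d0. Qed.

Lemma d1 : d 1 = 0.
Proof. by have := dmul 1 1; rewrite !mul1r mulr1 => /eqP; rewrite -subr_eq subrr eq_sym => /eqP. Qed.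

Lemma dsum I (r : seq I) P (F : I -> R) : d (\sum_(i <- r | P i) F i) = \sum_(i <- r | P i) d (F i).
Proof. exact: (big_morph d dadd d0). Qed.

Lemma dsign k : d ((-1) ^+ k) = 0.
Proof.
elim: k => [|k IH]; first by rewrite expr0 d1.
by rewrite exprS dmul IH mulr0 addr0 dN d1 oppr0 mul0r.
Qed.

Lemma dprod m (F : 'I_m -> R) :
  d (\prod_i F i) = \sum_j \prod_i (if i == j then d (F i) else F i).
Proof.
elim: m F => [|m IH] F; first by rewrite big_ord0 d1 big_ord0.
rewrite big_ord_recr /= dmul IH big_ord_recr /= mulr_suml.
congr (_ + _).
  apply: eq_bigr => j _; rewrite big_ord_recr /=.
  have -> : (ord_max == widen_ord (leqnSn m) j) = false.
    by apply/negbTE; rewrite neq_ltn /= ltn_ord orbT.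
  have wE i : (widen_ord (leqnSn m) i == widen_ord (leqnSn m) j) = (i == j).
    by rewrite -val_eqE /= val_eqE.
  by under [in RHS]eq_bigr => i _ do rewrite wE.
rewrite big_ord_recr /= eqxx; congr (_ * _); apply: eq_bigr => i _.
by have -> : (widen_ord (leqnSn m) i == ord_max) = false by
  apply/negbTE; rewrite neq_ltn /= ltn_ord.
Qed.

Lemma ddet M : d (\det M) = \sum_j \sum_c d (M j c) * cofactor M j c.
Proof.
transitivity (\sum_j \det (rowset M j (fun c => d (M j c)))); last first.
  by apply: eq_bigr => j _; rewrite det_rowset.
rewrite /(\det M) dsum.
under eq_bigr do rewrite dmul dsign mul0r add0r dprod mulr_sumr.
rewrite exchange_big /=; apply: eq_bigr => j _.
rewrite /(\det _); apply: eq_bigr => s _; congr (_ * _).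
by apply: eq_bigr => i _; rewrite mxE; case: eqP => // ->.
Qed.

End Mx.

Section W.
Variables (m : nat) (A : comAlgType Cplx) (D : 'I_m.+1 -> A -> A).
Hypothesis hder : forall i, derivation (D i).
Hypothesis hcomm : forall (i j : 'I_m.+1) (a : A), D i (D j a) = D j (D i a).
Local Notation n := m.+2.

Definition dd (r : 'I_n) (a : A) : A :=
  if val r == 0%N then a else Drow (n:=n) D (val r) a.

Lemma dd_lin r (c : Cplx) a b : dd r (c *: a + b) = c *: dd r a + dd r b.
Proof.
rewrite /dd; case: eqP => // _; rewrite /Drow; case: insub => [k|].
  by case: (hder k) => ->.
by rewrite scaler0 addr0.
Qed.

Lemma dd_add r a b : dd r (a + b) = dd r a + dd r b.
Proof. by rewrite -[a]scale1r dd_lin !scale1r. Qed.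

Lemma dd_mul r a b : val r != 0%N -> dd r (a * b) = dd r a * b + a * dd r b.
Proof.
rewrite /dd => /negbTE ->; rewrite /Drow; case: insub => [k|].
  by case: (hder k) => _ ->.
by rewrite mul0r mulr0 addr0.
Qed.

Lemma dd0 r : dd r 0 = 0.
Proof. exact: (d0 (dd_add r)). Qed.

Lemma D0 k : D k 0 = 0.
Proof.
case: (hder k) => lk _; have := lk (-1) 0 0.
by rewrite scaler0 addr0 scaleN1r addNr.
Qed.

Lemma ddC r s a : dd r (dd s a) = dd s (dd r a).
Proof.
rewrite /dd; case: eqP => // _; case: eqP => // _; rewrite /Drow.
case: insub => [k|]; case: insub => [l|] //.
  by rewrite D0.
by rewrite D0.
Qed.

Lemma dd_sum r I (s : seq I) P (F : I -> A) :
  dd r (\sum_(i <- s | P i) F i) = \sum_(i <- s | P i) dd r (F i).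
Proof. exact: (dsum (dd_add r)). Qed.

Lemma dd_nat r k : val r != 0%N -> dd r (k%:R) = 0.
Proof.
move=> r0; elim: k => [|k IH]; first exact: dd0.
by rewrite mulrS dd_add IH addr0 (d1 (fun a b => dd_mul a b r0)).
Qed.

Definition Wm (u : 'I_n -> A) : 'M[A]_n := \matrix_(i, j) dd i (u j).

Lemma WE u : wronskian_bracket (n:=n) D u = \det (Wm u).
Proof. by []. Qed.

Lemma Wm_upd u i v : Wm (upd u i v) = colset (Wm u) i (fun r => dd r v).
Proof. by apply/matrixP => r c; rewrite !mxE /upd; case: eqP. Qed.

Lemma W_nlinear : nlinear (wronskian_bracket (n:=n) D).
Proof.
move=> u i c a b; rewrite !WE !Wm_upd !det_colset scaler_sumr -big_split /=.
apply: eq_bigr => r _; by rewrite dd_lin mulrDl scalerAl.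
Qed.

Lemma W_skew : skew_symmetric (wronskian_bracket (n:=n) D).
Proof.
move=> s u; rewrite !WE.
have -> : Wm (fun k => u (s k)) = col_perm s (Wm u).
  by apply/matrixP => r c; rewrite !mxE.
by rewrite col_permE det_mulmx det_perm odd_permV mulrC.
Qed.

Lemma W_TP (h : A) (a : 'I_n -> A) :
  n%:R * h * wronskian_bracket (n:=n) D a =
  \sum_(i < n) wronskian_bracket (n:=n) D (upd a i (h * a i)).
Proof.
rewrite WE; under eq_bigr do rewrite WE Wm_upd det_colset.
set M := Wm a.
have E i r : dd r (h * a i) =
    h * M r i + (if val r == 0%N then 0 else dd r h) * M 0 i.
  rewrite !mxE; case: (eqVneq (val r) 0%N) => [r0|r0].
    by rewrite /dd r0 /= mul0r addr0.
  by rewrite dd_mul // addrC mulrC.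
under eq_bigr do under eq_bigr do rewrite E mulrDl.
under eq_bigr do rewrite big_split /=.
rewrite big_split /=.
have -> : \sum_(i < n) \sum_(r < n) h * M r i * cofactor M r i = h * (\det M *+ n).
  rewrite -sum_diag_cof mulr_sumr; apply: eq_bigr => i _.
  by rewrite big_distrr /=; apply: eq_bigr => r _; rewrite [RHS]mulrA.
have -> : \sum_(i < n) \sum_(r < n)
    (if val r == 0%N then 0 else dd r h) * M 0 i * cofactor M r i = 0.
  rewrite exchange_big /=.
  under eq_bigr do rewrite -(eq_bigr _ (fun i _ => mulrA _ _ _)) -mulr_sumr sum_row_cof.
  rewrite big_ord_recl /= mul0r add0r big1 // => r _.
  by rewrite mulr0n mulr0.
by rewrite addr0 mulr_natl mulrnAl mulrnAr.
Qed.

Lemma lift0_neq (k : 'I_m.+1) : (lift ord0 k == ord0 :> 'I_n) = false.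
Proof. by []. Qed.

Lemma val_lift0 (k : 'I_m.+1) : val (lift ord0 k : 'I_n) != 0%N.
Proof. by []. Qed.

Lemma two_neq0 : (2%:R : Cplx) != 0.
Proof. by rewrite pnatr_eq0. Qed.

Lemma half (x : A) : x + x = 0 -> x = 0.
Proof.
move=> h; rewrite -[x]scale1r -(mulVf two_neq0) -scalerA scaler_nat (mulr2n x) h.
by rewrite scaler0.
Qed.

Lemma sum_sym_anti k (P Q : 'I_k -> 'I_k -> A) :
  (forall r j, P r j = P j r) -> (forall r j, Q r j = - Q j r) ->
  \sum_r \sum_j P r j * Q r j = 0.
Proof.
move=> HP HQ; apply: half.
rewrite [X in X + _]exchange_big /=.
rewrite [X in X + _](eq_bigr (fun j => - \sum_r P j r * Q j r)); first by rewrite sumrN addNr.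
move=> j _; rewrite -sumrN; apply: eq_bigr => r _; by rewrite HP HQ mulrN.
Qed.

Section Div.
Variable y : 'I_n -> A.
Let Y := Wm (cons0 0 y).
Let g r := cofactor Y r ord0.
Let Q (r j c : 'I_n) := \det (colset (colset Y ord0 (@delta A n r)) c (@delta A n j)).

Lemma Yentry r c : val c != 0%N -> Y r c = dd r (y c).
Proof. by move=> hc; rewrite /Y mxE /cons0 (negbTE hc). Qed.

Lemma Q_anti r j c : c != ord0 -> Q r j c = - Q j r c.
Proof. by move=> hc; rewrite /Q det_swap. Qed.

Lemma dg r : val r != 0%N ->
  dd r (g r) = \sum_(c' < m.+1) \sum_j dd r (dd j (y (lift ord0 c'))) * Q r j (lift ord0 c').
Proof.
move=> r0; rewrite /g cofactor_delta.
rewrite (ddet (dd_add r) (fun a b => dd_mul a b r0)) exchange_big /=.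
rewrite big_ord_recl /= big1 ?add0r => [|j _]; last first.
  by rewrite mxE eqxx /delta dd_nat // mul0r.
apply: eq_bigr => c' _; apply: eq_bigr => j _.
by rewrite mxE lift0_neq Yentry // cofactor_delta.
Qed.

Lemma Fall (c : 'I_n) : c != ord0 -> \sum_r dd r (y c) * Q r ord0 c = - g ord0.
Proof.
move=> hc; have hc' : val c != 0%N by [].
transitivity (\sum_r Y r c * cofactor (colset Y c (delta A ord0)) r ord0).
  apply: eq_bigr => r _; rewrite Yentry // /Q colsetC //.
  by rewrite -cofactor_delta.
rewrite -det_colset det_swap; last by rewrite eq_sym.
by rewrite colset_id /g cofactor_delta.
Qed.

Lemma Q00 c : c != ord0 -> Q ord0 ord0 c = 0.
Proof. by move=> hc; apply: half; rewrite {1}Q_anti // addNr. Qed.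

Lemma div_id : \sum_(k < m.+1) dd (lift ord0 k) (g (lift ord0 k)) = - (g ord0 *+ m.+1).
Proof.
under eq_bigr do rewrite dg //.
rewrite exchange_big /=.
transitivity (\sum_(c' < m.+1) - g ord0); last by rewrite sumr_const card_ord mulNrn.
apply: eq_bigr => c' _.
set c : 'I_n := lift ord0 c'.
have hc : c != ord0 by rewrite /c lift0_neq.
under eq_bigr do rewrite big_ord_recl /=.
rewrite big_split /=.
rewrite [X in _ + X]sum_sym_anti ?addr0; first last.
- by move=> r j; rewrite Q_anti.
- by move=> r j; rewrite ddC.
have := Fall hc; rewrite big_ord_recl /= Q00 // mulr0 add0r => <-.
by apply: eq_bigr => r _; rewrite {2}/dd.
Qed.

End Div.

Lemma dd_ord0 (a : A) : dd ord0 a = a.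
Proof. by []. Qed.

Lemma W_filippov : filippov (wronskian_bracket (n:=n) D).
Proof.
move=> x y; rewrite WE.
set Y := Wm (cons0 0 y).
have phiE u : \det (Wm (cons0 u y)) = \sum_r dd r u * cofactor Y r ord0.
  have -> : Wm (cons0 u y) = colset Y ord0 (fun r => dd r u).
    apply/matrixP => r c; rewrite !mxE /cons0.
    case: (eqVneq c ord0) => [->|hc] //.
    by move: hc; rewrite -val_eqE /= => /negbTE ->.
  by rewrite det_colset.
set g := fun r => cofactor Y r ord0.
set M := Wm x.
under [in RHS]eq_bigr do rewrite !WE phiE Wm_upd det_colset.
rewrite phiE.
pose e (r k : 'I_n) := if val r == 0%N then 0 else dd r (g k).
have E r i : dd r (\sum_k dd k (x i) * g k) =
    \sum_k (dd r (dd k (x i)) * g k + dd k (x i) * e r k).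
  rewrite /e; case: (eqVneq (val r) 0%N) => [r0|r0].
    have idr a : dd r a = a by rewrite /dd r0.
    by rewrite idr; apply: eq_bigr => k _; rewrite idr mulr0 addr0.
  rewrite dd_sum; apply: eq_bigr => k _; by rewrite dd_mul.
under [in RHS]eq_bigr do under eq_bigr do rewrite E mulr_suml.
under [in RHS]eq_bigr do under eq_bigr do under eq_bigr do rewrite mulrDl.
under [in RHS]eq_bigr do under eq_bigr do rewrite big_split /=.
under [in RHS]eq_bigr do rewrite big_split /=.
rewrite big_split /=.
have PB : \sum_(i < n) \sum_(r < n) \sum_(k < n) dd k (x i) * e r k * cofactor M r i
    = - (g ord0 *+ m.+1) * \det M.
  rewrite exchange_big /=.
  under eq_bigr do rewrite exchange_big /=.
  transitivity (\sum_(r < n) e r r * \det M).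
    apply: eq_bigr => r _.
    transitivity (\sum_(k < n) e r k * (\det M *+ (k == r))).
      apply: eq_bigr => k _; rewrite -sum_row_cof mulr_sumr.
      by apply: eq_bigr => i _; rewrite /M mxE [RHS]mulrA [e r k * _]mulrC.
    rewrite (bigD1 r) //= eqxx mulr1n big1 ?addr0 // => k /negbTE ->.
    by rewrite mulr0n mulr0.
  rewrite big_ord_recl /= /e /= mul0r add0r -mulr_suml.
  by rewrite -(div_id y).
rewrite PB.
under [in RHS]eq_bigr do rewrite exchange_big /=.
rewrite [X in _ = X + _]exchange_big /=.
have PA : forall k : 'I_n, \sum_(i < n) \sum_(r < n) dd r (dd k (x i)) * g k * cofactor M r i
   = g k * (if val k == 0%N then \det M *+ n else dd k (\det M)).
  move=> k; case: (eqVneq (val k) 0%N) => [k0|k0].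
    have idk a : dd k a = a by rewrite /dd k0.
    rewrite -sum_diag_cof mulr_sumr; apply: eq_bigr => i _.
    rewrite mulr_sumr; apply: eq_bigr => r _.
    by rewrite idk /M mxE [RHS]mulrA [g k * _]mulrC.
  rewrite (ddet (dd_add k) (fun a b => dd_mul a b k0)) mulr_sumr exchange_big /=.
  apply: eq_bigr => r _; rewrite mulr_sumr; apply: eq_bigr => i _.
  by rewrite /M mxE ddC [RHS]mulrA [g k * _]mulrC.
under [in RHS]eq_bigr do rewrite PA.
rewrite -/M big_ord_recl [X in _ = X + _]big_ord_recl /= dd_ord0.
under eq_bigr do rewrite mulrC.
set S := \sum_(i < m.+1) _.
rewrite (WE x) -/M /g mulrnAr mulNr mulrnAl mulrS (mulrC (\det M)).
set t := cofactor Y ord0 ord0 * \det M; set u := t *+ m.+1.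
by rewrite addrAC -(addrA t) subrr addr0.
Qed.

Lemma phiE (x : 'I_n -> A) u :
  \det (Wm (cons0 u x)) = \sum_r dd r u * cofactor (Wm (cons0 0 x)) r ord0.
Proof.
have -> : Wm (cons0 u x) = colset (Wm (cons0 0 x)) ord0 (fun r => dd r u).
  apply/matrixP => r c; rewrite !mxE /cons0.
  case: (eqVneq c ord0) => [->|hc] //.
  by move: hc; rewrite -val_eqE /= => /negbTE ->.
by rewrite det_colset.
Qed.

Lemma hred (h y1 y2 : A) (x : 'I_n -> A) :
  y1 * \det (Wm (cons0 (h * y2) x)) - y2 * \det (Wm (cons0 (h * y1) x)) =
  h * (y1 * \det (Wm (cons0 y2 x)) - y2 * \det (Wm (cons0 y1 x))).
Proof.
rewrite !phiE !mulr_sumr -!sumrB mulr_sumr; apply: eq_bigr => r _.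
set g := cofactor _ r ord0.
have -> : y1 * (dd r (h * y2) * g) - y2 * (dd r (h * y1) * g) =
   (y1 * dd r (h * y2) - y2 * dd r (h * y1)) * g by ring.
have -> : y1 * (dd r y2 * g) - y2 * (dd r y1 * g) =
   (y1 * dd r y2 - y2 * dd r y1) * g by ring.
rewrite mulrA; congr (_ * _).
case: (eqVneq (val r) 0%N) => [r0|r0].
  have idr a : dd r a = a by rewrite /dd r0.
  rewrite !idr; ring.
rewrite !dd_mul //; ring.
Qed.

Lemma natat_ord (x : 'I_n -> A) (k : 'I_n) : natat x (val k) = x k.
Proof.
rewrite /natat; case: insubP => [k' _ /val_inj -> //|].
by rewrite ltn_ord.
Qed.

Lemma Wm_ext u v : (forall l, u l = v l) -> Wm u = Wm v.
Proof. by move=> uv; apply/matrixP => r c; rewrite !mxE uv. Qed.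

Section Strong.
Variables (y1 y2 : A) (x : 'I_n -> A).
Definition zz (j : nat) : A :=
  if j == 0%N then y1 else if j == 1%N then y2 else natat x j.-1.
Definition Bm : 'M[A]_(m.+3) :=
  \matrix_(r, c) if val r == 0%N then zz (val c) else dd (inord (val r).-1) (zz (val c)).

Lemma Bm_det0 : \det Bm = 0.
Proof.
apply: (@determinant_alternate _ _ _ ord0 (lift ord0 ord0)) => // c.
rewrite !mxE /=.
have -> : inord (0 + 0) = ord0 :> 'I_n by apply: val_inj; rewrite /= inordK.
by rewrite dd_ord0.
Qed.

Lemma Bm_minor (c : 'I_(m.+3)) :
  row' ord0 (col' c Bm) = Wm (fun l => zz (bump c l)).
Proof.
apply/matrixP => k l; rewrite !mxE /=.
by rewrite add0n inord_val.
Qed.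

Lemma P0 (l : 'I_n) : zz (bump 0 l) = cons0 y2 x l.
Proof.
rewrite /zz /cons0 /bump leq0n add1n.
case: l => [[|l'] hl] //=.
exact: (natat_ord x (Ordinal hl)).
Qed.

Lemma P1 (l : 'I_n) : zz (bump 1 l) = cons0 y1 x l.
Proof.
rewrite /zz /cons0 /bump.
case: l => [[|l'] hl] //=.
exact: (natat_ord x (Ordinal hl)).
Qed.

Lemma Pi (i : nat) (l : 'I_n) : (1 <= i)%N -> zz (bump i.+1 l) = omitarg x i y1 y2 l.
Proof.
move=> i1; rewrite /zz /omitarg /bump.
case: l => l hl /=.
case: l hl => [|[|l]] hl /=.
- by [].
- by have -> : (i.+1 <= 1)%N = false by case: i i1.
case: (leqP i.+1 l.+2) => H /=.
  have -> : (l.+2 <= i)%N = false by apply/negbTE; rewrite -ltnNge.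
  by [].
by move: H; rewrite ltnS => ->.
Qed.

Lemma Kid :
  y1 * \det (Wm (cons0 y2 x)) - y2 * \det (Wm (cons0 y1 x)) +
  \sum_(i < n | (1 <= val i)%N)
     (-1) ^+ (val i).-1 * x i * \det (Wm (omitarg x (val i) y1 y2)) = 0.
Proof.
apply: (etrans _ Bm_det0); rewrite [RHS](expand_det_row _ ord0).
rewrite [RHS]big_ord_recl [in RHS]big_ord_recl /= addrA.
rewrite big_mkcond big_ord_recl /= add0r.
congr (_ + _ + _).
- rewrite /cofactor Bm_minor !mxE /= expr0 mul1r.
  by congr (_ * \det _); apply: Wm_ext => l; rewrite P0.
- rewrite /cofactor Bm_minor !mxE /= expr1 mulN1r mulrN.
  by congr (- (_ * \det _)); apply: Wm_ext => l; rewrite P1.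
apply: eq_bigr => i _.
rewrite /cofactor Bm_minor !mxE /=.
have b0 k : bump 0 k = k.+1 by rewrite /bump leq0n add1n.
rewrite !b0 add0n.
have -> : zz i.+2 = x (lift ord0 i).
  by rewrite /zz /= -(natat_ord x (lift ord0 i)) /= b0.
have -> : Wm (fun l => zz (bump i.+2 l)) = Wm (omitarg x i.+1 y1 y2).
  by apply: Wm_ext => l; rewrite Pi.
rewrite !exprS !mulN1r opprK; ring.
Qed.

End Strong.

Lemma W_strong : strong_condition (wronskian_bracket (n:=n) D).
Proof.
move=> h y1 y2 x; rewrite !WE hred.
have -> : \sum_(i < n | (1 <= val i)%N)
     (-1) ^+ (val i).-1 * h * x i * wronskian_bracket (n:=n) D (omitarg x (val i) y1 y2)
   = h * \sum_(i < n | (1 <= val i)%N)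
     (-1) ^+ (val i).-1 * x i * \det (Wm (omitarg x (val i) y1 y2)).
  by rewrite mulr_sumr; apply: eq_bigr => i _; rewrite WE; ring.
by rewrite -mulrDr Kid mulr0.
Qed.

End W.
Unset Implicit Arguments.

Theorem mainTheorem2 (n : nat) (hn : (2 <= n)%N) (A : comAlgType Cplx)
  (D : 'I_n.-1 -> A -> A)
  (hder : forall i, derivation (D i))
  (hcomm : forall (i j : 'I_n.-1) (a : A), D i (D j a) = D j (D i a)) :
  strong_transposed_Poisson_nLie (wronskian_bracket D).
Proof.
case: n hn D hder hcomm => [|[|m]] // _ D hder hcomm.
split; first split; first split.
- exact: (W_nlinear hder).
- exact: W_skew.
- exact: (W_filippov hder hcomm).
- exact: (W_TP hder).
- exact: (W_strong hder).
Qed.
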